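(* Let $P,Q$ be closed wire calculus terms of sort $(k,l)$, $R$ a closed term of sort $(m,n)$, $S$ a closed term of sort $(l,l')$ and $T$ a closed term of sort $(k',k)$, and suppose $P\sim Q$. Then: (i) $P\mathrel{;}S\sim Q\mathrel{;}S$ and $T\mathrel{;}P\sim T\mathrel{;}Q$; (ii) $P\otimes R\sim Q\otimes R$ and $R\otimes P\sim R\otimes Q$; (iii) for prefix strings $u,v$ such that the prefix terms are well-sorted closed terms, $\frac{u}{v}.P\sim\frac{u}{v}.Q$; (iv) $P+R\sim Q+R$ and $R+P\sim R+Q$ (whenever these are well-sorted, i.e. $R$ has sort $(k,l)$).
   Context: Wire calculus. Fix a set $\Sigma$ of signals and a symbol $\iota\notin\Sigma$ (''no signal''); $L=\Sigma\cup\{\iota\}$. Prefix strings are words over the atoms: signal variables $x$, binders $\lambda x$, $\iota$, and constants $\sigma\in\Sigma$. Terms: $P::= Y \mid P\mathrel{;}P\mid P\otimes P\mid \frac{u}{v}.P\mid P+P\mid \mu Y{:}\tau.P$, with $Y$ process variables, $u,v$ prefix strings, $\tau$ a sort $(k,l)$, $k,l\ge0$. In $\frac{u}{v}.P$ the variables $x$ with $\lambda x$ occurring in $uv$ are bound in $P$ (the set $bd$); other variables occurring in $uv$ are free ($fr$). Sorting (context $\Gamma$ of sorted process variables and signal variables): $Y$ has its declared sort; if $P:(k,n)$, $R:(n,l)$ then $P\mathrel{;}R:(k,l)$; if $P:(k,l)$, $Q:(m,n)$ then $P\otimes Q:(k+m,l+n)$; if $P:\tau$ under $\Gamma,Y{:}\tau'$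 then $\mu Y{:}\tau'.P:\tau$; if $|u|=k$, $|v|=l$, $fr\cap bd=\varnothing$, $fr\subseteq\Gamma$ and $P:(k,l)$ under $\Gamma\cup bd$, then $\frac{u}{v}.P:(k,l)$; if $P,Q:\tau$ then $P+Q:\tau$. Only closed terms (sorted in the empty context) are considered; terms are taken up to renaming of bound variables, with no other structural congruence. $\otimes$ binds tighter than $;$. Semantics: transitions $P\xrightarrow[\vec b]{\vec a}Q$ with $\vec a,\vec b\in L^*$ (upper label $\vec a$ of length $k$, lower $\vec b$ of length $l$ for $P:(k,l)$), $\vec\iota$ denoting words of $\iota$'s, generated by the rules: (Refl) $P\xrightarrow[\vec\iota]{\vec\iota}P$; ($\iota$L) from $P\xrightarrow[\vec\iota]{\vec\iota}R$ and $R\xrightarrow[\vec b]{\vec a}Q$ infer $P\xrightarrow[\vec b]{\vec a}Q$; ($\iota$R) from $P\xrightarrow[\vec b]{\vec a}R$ and $R\xrightarrow[\vec\iota]{\vec\iota}Q$ infer $P\xrightarrow[\vec b]{\vec a}Q$; (Cut) from $P\xrightarrow[\vec c]{\vec a}Q$, $R\xrightarrow[\vec b]{\vec c}S$ infer $P\mathrel{;}R\xrightarrow[\vec b]{\vec a}Q\mathrel{;}S$; (Ten) from $P\xrightarrow[\vec b]{\vec a}Q$, $R\xrightarrow[\vec d]{\vec c}S$ infer $P\otimes R\xrightarrow[\vec b\vec d]{\vec a\vec c}Q\otimes S$; (Pref) for every map $\sigma:bd\to L$, $\frac{u}{v}.P\xrightarrow[v|_\sigma]{u|_\sigma}P|_\sigma$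 where $u|_\sigma$ replaces each $\lambda x$ by $\sigma(x)$ and $P|_\sigma$ substitutes $\sigma(x)$ for $x$; (Rec) from $P[\mu Y.P/Y]\xrightarrow[\vec b]{\vec a}Q$ infer $\mu Y.P\xrightarrow[\vec b]{\vec a}Q$; ($+\iota$) from $P\xrightarrow[\vec\iota]{\vec\iota}Q$, $R\xrightarrow[\vec\iota]{\vec\iota}S$ infer $P+R\xrightarrow[\vec\iota]{\vec\iota}Q+S$; ($+$L) from $P\xrightarrow[\vec b]{\vec a}Q$ with $\vec a\vec b$ not consisting only of $\iota$'s infer $P+R\xrightarrow[\vec b]{\vec a}Q$, and symmetrically ($+$R). Bisimilarity: for closed terms $P,Q$ of the same sort, $P\sim Q$ iff there is a relation $S$ on terms containing $(P,Q)$ such that whenever $(P',Q')\in S$ and $P'\xrightarrow[\vec b]{\vec a}P''$ there is $Q''$ with $Q'\xrightarrow[\vec b]{\vec a}Q''$ and $(P'',Q'')\in S$, and symmetrically with the roles of the two sides exchanged. *)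

(* Defs.v *)
From Stdlib Require Import List Arith Bool.
Import ListNotations.
Set Implicit Arguments.

Section Wire.

(* The set of signals Sigma; the label set L = Sigma + {iota} is [option Sig],
   with [None] playing the role of iota ("no signal"). *)
Variable Sig : Type.
Definition L := option Sig.

(* Atoms of prefix strings: signal variable x, binder \lambda x, iota, constant sigma. *)
Inductive atom : Type :=
| AVar  : nat -> atom
| ABind : nat -> atom
| AIota : atom
| AConst : Sig -> atom.

Inductive term : Type :=
| TVar  : nat -> term
| Seq   : term -> term -> term
| Ten   : term -> term -> term
| Pref  : list atom -> list atom -> term -> term
| Plus  : term -> term -> term
| Mu    : nat -> nat * nat -> term -> term.

Fixpoint bd (w : list atom) : list nat :=
  match w with
  | [] => []
  | ABind x :: w' => x :: bd w'
  | _ :: w' => bd w'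
  end.

Fixpoint fr (w : list atom) : list nat :=
  match w with
  | [] => []
  | AVar x :: w' => x :: fr w'
  | _ :: w' => fr w'
  end.

Definition memb (x : nat) (s : list nat) : bool := existsb (Nat.eqb x) s.

Fixpoint lookup (Y : nat) (pe : list (nat * (nat * nat))) : option (nat * nat) :=
  match pe with
  | [] => None
  | (Z, t) :: pe' => if Nat.eqb Y Z then Some t else lookup Y pe'
  end.

(* Sorting judgement: [sorted pe D P k l] means P : (k,l) in the context made of
   the sorted process variables [pe] and the signal variables [D]. *)
Inductive sorted : list (nat * (nat * nat)) -> list nat -> term -> nat -> nat -> Prop :=
| s_var pe D Y k l :
    lookup Y pe = Some (k, l) -> sorted pe D (TVar Y) k l
| s_seq pe D P R k n l :
    sorted pe D P k n -> sorted pe D R n l -> sorted pe D (Seq P R) k l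
| s_ten pe D P Q k l m n :
    sorted pe D P k l -> sorted pe D Q m n -> sorted pe D (Ten P Q) (k + m) (l + n)
| s_mu pe D Y t P k l :
    sorted ((Y, t) :: pe) D P k l -> sorted pe D (Mu Y t P) k l
| s_pref pe D u v P :
    (forall x, In x (fr (u ++ v)) -> ~ In x (bd (u ++ v))) ->
    (forall x, In x (fr (u ++ v)) -> In x D) ->
    sorted pe (D ++ bd (u ++ v)) P (length u) (length v) ->
    sorted pe D (Pref u v P) (length u) (length v)
| s_plus pe D P Q k l :
    sorted pe D P k l -> sorted pe D Q k l -> sorted pe D (Plus P Q) k l.

Definition closed_sort (P : term) (k l : nat) : Prop := sorted [] [] P k l.

Definition atom_of_L (a : L) : atom :=
  match a with None => AIota | Some c => AConst c end.

Definition asubst (f : nat -> option L) (a : atom) : atom :=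
  match a with
  | AVar x => match f x with Some c => atom_of_L c | None => a end
  | _ => a
  end.

Fixpoint ssubst (f : nat -> option L) (P : term) : term :=
  match P with
  | TVar Y => TVar Y
  | Seq P1 P2 => Seq (ssubst f P1) (ssubst f P2)
  | Ten P1 P2 => Ten (ssubst f P1) (ssubst f P2)
  | Plus P1 P2 => Plus (ssubst f P1) (ssubst f P2)
  | Mu Y t P1 => Mu Y t (ssubst f P1)
  | Pref u v P1 =>
      let f' := fun x => if memb x (bd (u ++ v)) then None else f x in
      Pref (map (asubst f') u) (map (asubst f') v) (ssubst f' P1)
  end.

Fixpoint psubst (Y : nat) (R : term) (P : term) : term :=
  match P with
  | TVar Z => if Nat.eqb Z Y then R else TVar Z
  | Seq P1 P2 => Seq (psubst Y R P1) (psubst Y R P2)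
  | Ten P1 P2 => Ten (psubst Y R P1) (psubst Y R P2)
  | Plus P1 P2 => Plus (psubst Y R P1) (psubst Y R P2)
  | Mu Z t P1 => if Nat.eqb Z Y then Mu Z t P1 else Mu Z t (psubst Y R P1)
  | Pref u v P1 => Pref u v (psubst Y R P1)
  end.

(* The map sigma : bd -> L, given as a total function sigma restricted to bd. *)
Definition restr (B : list nat) (sigma : nat -> L) : nat -> option L :=
  fun x => if memb x B then Some (sigma x) else None.

Definition inst_atom (B : list nat) (sigma : nat -> L) (a : atom) : option L :=
  match a with
  | AVar x => restr B sigma x
  | ABind x => Some (sigma x)
  | AIota => Some None
  | AConst c => Some (Some c)
  end.

Fixpoint inst (B : list nat) (sigma : nat -> L) (w : list atom) : option (list L) :=
  match w with
  | [] => Some []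
  | a :: w' =>
      match inst_atom B sigma a, inst B sigma w' with
      | Some c, Some cs => Some (c :: cs)
      | _, _ => None
      end
  end.

Definition iotas (w : list L) : Prop := Forall (fun c => c = None) w.

Inductive trans : term -> list L -> list L -> term -> Prop :=
| t_refl P k l :
    closed_sort P k l -> trans P (repeat None k) (repeat None l) P
| t_iotaL P a0 b0 R a b Q :
    iotas a0 -> iotas b0 -> trans P a0 b0 R -> trans R a b Q -> trans P a b Q
| t_iotaR P a b R a0 b0 Q :
    iotas a0 -> iotas b0 -> trans P a b R -> trans R a0 b0 Q -> trans P a b Q
| t_cut P a c Q R b S :
    trans P a c Q -> trans R c b S -> trans (Seq P R) a b (Seq Q S)
| t_ten P a b Q R c d S :
    trans P a b Q -> trans R c d S -> trans (Ten P R) (a ++ c) (b ++ d) (Ten Q S)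
| t_pref u v P (sigma : nat -> L) a b :
    inst (bd (u ++ v)) sigma u = Some a ->
    inst (bd (u ++ v)) sigma v = Some b ->
    trans (Pref u v P) a b (ssubst (restr (bd (u ++ v)) sigma) P)
| t_rec Y t P a b Q :
    trans (psubst Y (Mu Y t P) P) a b Q -> trans (Mu Y t P) a b Q
| t_plus_iota P a b Q R S :
    iotas a -> iotas b -> trans P a b Q -> trans R a b S ->
    trans (Plus P R) a b (Plus Q S)
| t_plusL P a b Q R :
    ~ iotas (a ++ b) -> trans P a b Q -> trans (Plus P R) a b Q
| t_plusR R a b S P :
    ~ iotas (a ++ b) -> trans R a b S -> trans (Plus P R) a b S.

Definition is_bisimulation (Rel : term -> term -> Prop) : Prop :=
  forall P Q, Rel P Q ->
    (forall a b P', trans P a b P' -> exists Q', trans Q a b Q' /\ Rel P' Q') /\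
    (forall a b Q', trans Q a b Q' -> exists P', trans P a b P' /\ Rel P' Q').

Definition bisimilar (P Q : term) : Prop :=
  (exists k l, closed_sort P k l /\ closed_sort Q k l) /\
  exists Rel, Rel P Q /\ is_bisimulation Rel.

End Wire.

(* Main.v *)
Require Import Defs.
From Stdlib Require Import List Arith Bool.
Import ListNotations.
Set Implicit Arguments.

Definition B {Sig : Type} (P Q : term Sig) := exists Rel, Rel P Q /\ is_bisimulation Rel.

Lemma B_sim {Sig : Type} (P Q : term Sig) a b P' :
  B P Q -> trans P a b P' -> exists Q', trans Q a b Q' /\ B P' Q'.
Proof.
  intros [Rel [HR Hb]] Ht. destruct (Hb _ _ HR) as [H1 _].
  destruct (H1 _ _ _ Ht) as [Q' [HQ HR']]. exists Q'; split; auto. exists Rel; auto.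
Qed.

Lemma B_sym {Sig : Type} (P Q : term Sig) : B P Q -> B Q P.
Proof.
  intros [Rel [HR Hb]]. exists (fun x y => Rel y x). split; auto.
  intros X Y H. destruct (Hb _ _ H) as [H1 H2]. split; intros.
  - destruct (H2 _ _ _ H0) as [Z [? ?]]; eauto.
  - destruct (H1 _ _ _ H0) as [Z [? ?]]; eauto.
Qed.

Lemma B_refl {Sig : Type} (P : term Sig) : B P P.
Proof.
  exists eq. split; auto. intros X Y H; subst; split; intros; eauto.
Qed.

Definition fwd {Sig : Type} (C0 : term Sig -> term Sig -> Prop) :=
  forall X a b X', trans X a b X' -> forall Y, C0 X Y ->
    exists Y', trans Y a b Y' /\ (B X' Y' \/ C0 X' Y').

Lemma ext_sim {Sig : Type} (C0 : term Sig -> term Sig -> Prop) R a b Q :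
  trans R a b Q ->
  (forall Y, C0 R Y -> exists Y', trans Y a b Y' /\ (B Q Y' \/ C0 Q Y')) ->
  forall Y1, B R Y1 \/ C0 R Y1 -> exists Y', trans Y1 a b Y' /\ (B Q Y' \/ C0 Q Y').
Proof.
  intros Ht IH Y1 [HB|HC]; auto.
  destruct (B_sim HB Ht) as [Y' [? ?]]; eauto.
Qed.

Lemma mk {Sig : Type} (C0 : term Sig -> term Sig -> Prop) :
  fwd C0 -> (forall X Y, C0 X Y -> C0 Y X) ->
  is_bisimulation (fun X Y => B X Y \/ C0 X Y).
Proof.
  intros Hf Hs.
  assert (F : forall X Y, B X Y \/ C0 X Y -> forall a b X', trans X a b X' ->
            exists Y', trans Y a b Y' /\ (B X' Y' \/ C0 X' Y')).
  { intros X Y HC a b X' Ht. destruct HC as [HB|HC].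
    - destruct (B_sim HB Ht) as [Y' [? ?]]; eauto.
    - eapply Hf; eauto. }
  intros X Y HC. split.
  - apply F; auto.
  - intros a b Y' Ht.
    assert (HC' : B Y X \/ C0 Y X) by (destruct HC; [left; apply B_sym|right; apply Hs]; auto).
    destruct (F _ _ HC' _ _ _ Ht) as [X' [HX [HB|HC2]]]; exists X'; split; auto.
    left; apply B_sym; auto.
Qed.

Lemma mk_bisim {Sig : Type} (C0 : term Sig -> term Sig -> Prop) X Y :
  fwd C0 -> (forall X Y, C0 X Y -> C0 Y X) -> C0 X Y ->
  (exists k l, closed_sort X k l /\ closed_sort Y k l) -> bisimilar X Y.
Proof.
  intros Hf Hs HC Hk. split; auto. exists (fun X Y => B X Y \/ C0 X Y).
  split; auto. apply mk; auto.
Qed.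

Lemma iotas_repeat {Sig : Type} k : iotas (repeat (@None Sig) k).
Proof. induction k; simpl; constructor; auto. Qed.

Ltac iotaL_tac IH1 IH2 H2 HC :=
    let Y1 := fresh "Y1" in let HY1 := fresh in let HC1 := fresh in
    let Y2 := fresh "Y2" in let HY2 := fresh in let HC2 := fresh in
    destruct (IH1 _ HC) as [Y1 [HY1 HC1]];
    destruct (@ext_sim _ _ _ _ _ _ H2 IH2 _ HC1) as [Y2 [HY2 HC2]];
    exists Y2; split; [ first [eapply t_iotaL; [ | | exact HY1 | exact HY2 ] | eapply t_iotaR; [ | | exact HY1 | exact HY2] ]; assumption | exact HC2 ].

Definition CSeqL {Sig : Type} (X Y : term Sig) :=
  exists P Q S, B P Q /\ X = Seq P S /\ Y = Seq Q S.

Lemma fwd_SeqL {Sig : Type} : fwd (@CSeqL Sig).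
Proof.
  intros X a b X' Ht. induction Ht; intros Y0 HC;
    try iotaL_tac IHHt1 IHHt2 Ht2 HC; destruct HC as (P0 & Q0 & S0 & HB & EX & EY); try discriminate; subst.
  - inversion H; subst.
    match goal with Hs : sorted [] [] P0 _ _ |- _ =>
      destruct (B_sim HB (t_refl Hs)) as [Q' [HQ HB']] end.
    exists (Seq Q' S0). split. eapply t_cut; [exact HQ| apply t_refl; eassumption].
    right; eexists _, _, _; split; [exact HB' | split; reflexivity].
  - inversion EX; subst. destruct (B_sim HB Ht1) as [Q' [HQ HB']].
    exists (Seq Q' S). split. eapply t_cut; eauto. right; eexists _, _, _; split; [exact HB' | split; reflexivity].
Qed.

Definition CSeqR {Sig : Type} (X Y : term Sig) :=
  exists P Q T, B P Q /\ X = Seq T P /\ Y = Seq T Q.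

Lemma fwd_SeqR {Sig : Type} : fwd (@CSeqR Sig).
Proof.
  intros X a b X' Ht. induction Ht; intros Y0 HC;
    try iotaL_tac IHHt1 IHHt2 Ht2 HC; destruct HC as (P0 & Q0 & S0 & HB & EX & EY); try discriminate; subst.
  - inversion H; subst.
    match goal with Hs : sorted [] [] P0 _ _ |- _ =>
      destruct (B_sim HB (t_refl Hs)) as [Q' [HQ HB']] end.
    exists (Seq S0 Q'). split. eapply t_cut; [apply t_refl; eassumption | exact HQ].
    right; eexists _, _, _; split; [exact HB' | split; reflexivity].
  - inversion EX; subst. destruct (B_sim HB Ht2) as [Q' [HQ HB']].
    exists (Seq Q Q'). split. eapply t_cut; eauto. right; eexists _, _, _; split; [exact HB' | split; reflexivity].
Qed.

Definition CTenL {Sig : Type} (X Y : term Sig) :=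
  exists P Q S, B P Q /\ X = Ten P S /\ Y = Ten Q S.

Lemma fwd_TenL {Sig : Type} : fwd (@CTenL Sig).
Proof.
  intros X a b X' Ht. induction Ht; intros Y0 HC;
    try iotaL_tac IHHt1 IHHt2 Ht2 HC; destruct HC as (P0 & Q0 & S0 & HB & EX & EY); try discriminate; subst.
  - inversion H; subst.
    match goal with Hs : sorted [] [] P0 _ _ |- _ =>
      destruct (B_sim HB (t_refl Hs)) as [Q' [HQ HB']] end.
    exists (Ten Q' S0). split. rewrite !repeat_app. eapply t_ten; [exact HQ| apply t_refl; eassumption].
    right; eexists _, _, _; split; [exact HB' | split; reflexivity].
  - inversion EX; subst. destruct (B_sim HB Ht1) as [Q' [HQ HB']].
    exists (Ten Q' S). split. eapply t_ten; eauto. right; eexists _, _, _; split; [exact HB' | split; reflexivity].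
Qed.

Definition CTenR {Sig : Type} (X Y : term Sig) :=
  exists P Q T, B P Q /\ X = Ten T P /\ Y = Ten T Q.

Lemma fwd_TenR {Sig : Type} : fwd (@CTenR Sig).
Proof.
  intros X a b X' Ht. induction Ht; intros Y0 HC;
    try iotaL_tac IHHt1 IHHt2 Ht2 HC; destruct HC as (P0 & Q0 & S0 & HB & EX & EY); try discriminate; subst.
  - inversion H; subst.
    match goal with Hs : sorted [] [] P0 _ _ |- _ =>
      destruct (B_sim HB (t_refl Hs)) as [Q' [HQ HB']] end.
    exists (Ten S0 Q'). split. rewrite !repeat_app. eapply t_ten; [apply t_refl; eassumption | exact HQ].
    right; eexists _, _, _; split; [exact HB' | split; reflexivity].
  - inversion EX; subst. destruct (B_sim HB Ht2) as [Q' [HQ HB']].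
    eexists. split. eapply t_ten; [eassumption | exact HQ]. right; eexists _, _, _; split; [exact HB' | split; reflexivity].
Qed.

Definition CPlusL {Sig : Type} (X Y : term Sig) :=
  exists P Q S, B P Q /\ X = Plus P S /\ Y = Plus Q S.

Lemma fwd_PlusL {Sig : Type} : fwd (@CPlusL Sig).
Proof.
  intros X a b X' Ht. induction Ht; intros Y0 HC;
    try iotaL_tac IHHt1 IHHt2 Ht2 HC; destruct HC as (P0 & Q0 & S0 & HB & EX & EY); try discriminate; subst.
  - inversion H; subst.
    match goal with Hs : sorted [] [] P0 _ _ |- _ =>
      destruct (B_sim HB (t_refl Hs)) as [Q' [HQ HB']] end.
    exists (Plus Q' S0). split. apply t_plus_iota; try apply iotas_repeat; [exact HQ| apply t_refl; eassumption].
    right; eexists _, _, _; split; [exact HB' | split; reflexivity].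
  - inversion EX; subst. destruct (B_sim HB Ht1) as [Q' [HQ HB']].
    eexists. split. eapply t_plus_iota; [eassumption|eassumption|exact HQ|eassumption]. right; eexists _, _, _; split; [exact HB' | split; reflexivity].
  - inversion EX; subst. destruct (B_sim HB Ht) as [Q' [HQ HB']].
    exists Q'. split. apply t_plusL; auto. left; auto.
  - inversion EX; subst.
    eexists. split. eapply t_plusR; [eassumption|eassumption]. left; apply B_refl.
Qed.

Definition CPlusR {Sig : Type} (X Y : term Sig) :=
  exists P Q S, B P Q /\ X = Plus S P /\ Y = Plus S Q.

Lemma fwd_PlusR {Sig : Type} : fwd (@CPlusR Sig).
Proof.
  intros X a b X' Ht. induction Ht; intros Y0 HC;
    try iotaL_tac IHHt1 IHHt2 Ht2 HC; destruct HC as (P0 & Q0 & S0 & HB & EX & EY); try discriminate; subst.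
  - inversion H; subst.
    match goal with Hs : sorted [] [] P0 _ _ |- _ =>
      destruct (B_sim HB (t_refl Hs)) as [Q' [HQ HB']] end.
    exists (Plus S0 Q'). split. apply t_plus_iota; try apply iotas_repeat; [apply t_refl; eassumption | exact HQ].
    right; eexists _, _, _; split; [exact HB' | split; reflexivity].
  - inversion EX; subst. destruct (B_sim HB Ht2) as [Q' [HQ HB']].
    eexists. split. eapply t_plus_iota; [eassumption|eassumption|eassumption|exact HQ]. right; eexists _, _, _; split; [exact HB' | split; reflexivity].
  - inversion EX; subst.
    eexists. split. eapply t_plusL; [eassumption|eassumption]. left; apply B_refl.
  - inversion EX; subst. destruct (B_sim HB Ht) as [Q' [HQ HB']].
    exists Q'. split. apply t_plusR; auto. left; auto.
Qed.

Lemma fr_app {Sig : Type} (u v : list (atom Sig)) : fr (u ++ v) = fr u ++ fr v.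
Proof. induction u as [|x u IH]; simpl; auto. destruct x; simpl; rewrite IH; auto. Qed.

Lemma map_asubst_id {Sig : Type} (f : nat -> option (L Sig)) (w : list (atom Sig)) :
  (forall x, In x (fr w) -> f x = None) -> map (asubst f) w = w.
Proof.
  induction w as [|x w IH]; simpl; intros H; auto.
  destruct x; simpl in *.
  - rewrite H by auto. rewrite IH; auto.
  - rewrite IH; auto.
  - rewrite IH; auto.
  - rewrite IH; auto.
Qed.

Lemma ssubst_closed {Sig : Type} pe D (P : term Sig) k l :
  sorted pe D P k l -> forall f, (forall x, In x D -> f x = None) -> ssubst f P = P.
Proof.
  induction 1; intros f Hf; simpl; auto.
  - rewrite IHsorted1, IHsorted2; auto.
  - rewrite IHsorted1, IHsorted2; auto.
  - rewrite IHsorted; auto.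
  - set (f' := fun x => if memb x (bd (u ++ v)) then None else f x).
    assert (Hfr : forall x, In x (fr (u ++ v)) -> f' x = None).
    { intros x Hx. unfold f'. destruct (memb x (bd (u ++ v))); auto. }
    rewrite fr_app in Hfr.
    rewrite !map_asubst_id; try (intros; apply Hfr; apply in_or_app; auto).
    rewrite IHsorted; auto.
    intros x Hx. apply in_app_or in Hx. unfold f'. destruct Hx as [Hx|Hx].
    + destruct (memb x (bd (u ++ v))); auto.
    + assert (memb x (bd (u ++ v)) = true) as -> ; auto.
      unfold memb. apply existsb_exists. exists x; split; auto. apply Nat.eqb_refl.
  - rewrite IHsorted1, IHsorted2; auto.
Qed.

Definition CPref {Sig : Type} (X Y : term Sig) :=
  exists u v P Q, B P Q /\ (exists k l, closed_sort P k l /\ closed_sort Q k l) /\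
    (exists k l, closed_sort (Pref u v P) k l) /\ (exists k l, closed_sort (Pref u v Q) k l) /\
    X = Pref u v P /\ Y = Pref u v Q.

Lemma fwd_Pref {Sig : Type} : fwd (@CPref Sig).
Proof.
  intros X a b X' Ht. induction Ht; intros Y0 HC;
    try iotaL_tac IHHt1 IHHt2 Ht2 HC;
    destruct HC as (u0 & v0 & P0 & Q0 & HB & (k0 & l0 & HP0 & HQ0) & (k1 & l1 & HPP) & (k2 & l2 & HPQ) & EX & EY);
    try discriminate; subst.
  - exists (Pref u0 v0 Q0). split.
    + inversion H; subst. inversion HPQ; subst. apply t_refl. auto.
    + right. exists u0, v0, P0, Q0. repeat split; eauto.
  - inversion EX; subst.
    exists Q0. split.
    + pose proof (@t_pref _ u0 v0 Q0 sigma _ _ H H0) as Ht.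
      rewrite (ssubst_closed HQ0) in Ht; auto. simpl; tauto.
    + left. rewrite (ssubst_closed HP0); auto. simpl; tauto.
Qed.

Lemma bisim_B {Sig : Type} (P Q : term Sig) : bisimilar P Q -> B P Q.
Proof. intros [_ H]; exact H. Qed.

Ltac symC := intros X Y (P1 & Q1 & S1 & HB1 & -> & ->); eexists _, _, _; split; [apply B_sym; exact HB1 | split; reflexivity].

Theorem mainTheorem1 (Sig : Type) (P Q R S T : term Sig) (k l m n l' k' : nat) :
  closed_sort P k l -> closed_sort Q k l -> closed_sort R m n ->
  closed_sort S l l' -> closed_sort T k' k ->
  bisimilar P Q ->
  (* (i) *)
  (bisimilar (Seq P S) (Seq Q S) /\ bisimilar (Seq T P) (Seq T Q)) /\
  (* (ii) *)
  (bisimilar (Ten P R) (Ten Q R) /\ bisimilar (Ten R P) (Ten R Q)) /\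
  (* (iii) *)
  (forall u v : list (atom Sig),
     (exists k0 l0, closed_sort (Pref u v P) k0 l0) ->
     (exists k0 l0, closed_sort (Pref u v Q) k0 l0) ->
     bisimilar (Pref u v P) (Pref u v Q)) /\
  (* (iv) *)
  (m = k -> n = l ->
     bisimilar (Plus P R) (Plus Q R) /\ bisimilar (Plus R P) (Plus R Q)).
Proof.
  intros HP HQ HR HS HT HPQ. apply bisim_B in HPQ.
  split; [split|split; [split|split]].
  - apply (mk_bisim (C0 := @CSeqL Sig)); [apply fwd_SeqL | symC | |].
    + exists P, Q, S; auto.
    + exists k, l'; split; econstructor; eauto.
  - apply (mk_bisim (C0 := @CSeqR Sig)); [apply fwd_SeqR | symC | |].
    + exists P, Q, T; auto.
    + exists k', l; split; econstructor; eauto.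
  - apply (mk_bisim (C0 := @CTenL Sig)); [apply fwd_TenL | symC | |].
    + exists P, Q, R; auto.
    + exists (k + m), (l + n); split; econstructor; eauto.
  - apply (mk_bisim (C0 := @CTenR Sig)); [apply fwd_TenR | symC | |].
    + exists P, Q, R; auto.
    + exists (m + k), (n + l); split; econstructor; eauto.
  - intros u v [k1 [l1 H1]] [k2 [l2 H2]].
    apply (mk_bisim (C0 := @CPref Sig)); [apply fwd_Pref | | |].
    + intros X Y (u0 & v0 & P0 & Q0 & HB & (k0 & l0 & HP0 & HQ0) & HPP & HPQ' & -> & ->).
      exists u0, v0, Q0, P0. repeat split; auto. apply B_sym; auto. eauto.
    + exists u, v, P, Q. repeat split; eauto.
    + exists k1, l1. split; auto.
      inversion H1; subst. inversion H2; subst. auto.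
  - intros -> ->. split.
    + apply (mk_bisim (C0 := @CPlusL Sig)); [apply fwd_PlusL | symC | |].
      * exists P, Q, R; auto.
      * exists k, l; split; econstructor; eauto.
    + apply (mk_bisim (C0 := @CPlusR Sig)); [apply fwd_PlusR | symC | |].
      * exists P, Q, R; auto.
      * exists k, l; split; econstructor; eauto.
Qed.
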